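(* Let $k:\mathbb R\to[0,\infty)$ be continuous with $\int_{\mathbb R}k(x)\,dx=1$, satisfying (K1) there is $\lambda>0$ with $\int_{\mathbb R}k(x)e^{\lambda|x|}dx<+\infty$, and (K2) $k(x_1)>0$, $k(x_2)>0$ for some $x_1>0$, $x_2<0$. Let $f\in C^1([0,1])$ satisfy $f(0)=f(1)=0$, $f(u)>0$ for $u\in(0,1)$, $f'(0)>0$ and $f(u)\leqslant f'(0)u$ for $u\in(0,1)$. Let $u_0\in C(\mathbb R)$ with $0\leqslant u_0\leqslant 1$, and let $u(t,x)$ be the solution of \[ u_t(t,x)=\int_{\mathbb R}k(x-y)u(t,y)\,dy-u(t,x)+f(u(t,x)),\ t>0,\ x\in\mathbb R,\qquad u(0,x)=u_0(x). \] If, for some $x_1\in\mathbb R$, both $k(\cdot)$ and $u_0(\cdot+x_1)$ are symmetric (even) and decreasing on $\mathbb R^+$, then for every $t>0$ the function $u(t,\cdot+x_1)$ is symmetric and decreasing on $\mathbb R^+$.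
   Context: ''Decreasing on $\mathbb R^+$'' for a function $g$ means $g(x)\geqslant g(y)$ whenever $0\leqslant x\leqslant y$. *)

(* Defs.v *)
From Stdlib Require Import Reals.
From Coquelicot Require Import Coquelicot.
Open Scope R_scope.

Definition even_fun (g : R -> R) : Prop := forall x, g (- x) = g x.

Definition decr_Rplus (g : R -> R) : Prop :=
  forall x y, 0 <= x -> x <= y -> g y <= g x.

Definition is_int_R (g : R -> R) (l : R) : Prop :=
  is_RInt_gen g (Rbar_locally m_infty) (Rbar_locally p_infty) l.

Definition I01 (x : R) : Prop := 0 <= x <= 1.

Definition is_derive_01 (f df : R -> R) : Prop :=
  forall x, I01 x ->
    filterlim (fun y => (f y - f x) / (y - x))
      (within (fun y => I01 y /\ y <> x) (locally x)) (locally (df x)).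

Definition C1_01 (f df : R -> R) : Prop :=
  is_derive_01 f df /\ continuous_on I01 df.

(** u (with u t x = u(t,x)) is a solution of the nonlocal equation
    u_t = k * u - u + f(u) with initial datum u0, taking values in [0,1]
    (the domain of f). *)
Definition is_solution (k f u0 : R -> R) (u : R -> R -> R) : Prop :=
  (forall t x, 0 <= t -> I01 (u t x)) /\
  (forall x, u 0 x = u0 x) /\
  (forall x, filterlim (fun s => u s x) (at_right 0) (locally (u 0 x))) /\
  (forall t x, 0 < t ->
     exists I : R,
       is_int_R (fun y => k (x - y) * u t y) I /\
       is_derive (fun s => u s x) t (I - u t x + f (u t x))).

(* Main.v *)
Require Import Defs.
From Stdlib Require Import Reals Lra Classical.
From Coquelicot Require Import Coquelicot.
Open Scope R_scope.

Lemma fp_refl (c : R) (P : R * R -> Prop) :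
  filter_prod (Rbar_locally m_infty) (Rbar_locally p_infty) P ->
  filter_prod (Rbar_locally m_infty) (Rbar_locally p_infty)
    (fun ab => P (c - snd ab, c - fst ab)).
Proof.
  intros [Q R' HQ HR HP].
  destruct HQ as [M1 HM1]. destruct HR as [M2 HM2].
  apply (Filter_prod _ _ _ (fun a => R' (c - a)) (fun b => Q (c - b))).
  - exists (c - M2). intros x Hx. apply HM2. lra.
  - exists (c - M1). intros x Hx. apply HM1. lra.
  - intros x y Hx Hy. simpl. apply HP; assumption.
Qed.

Lemma is_int_R_refl (g : R -> R) (c l : R) :
  is_int_R g l -> is_int_R (fun y => g (c - y)) l.
Proof.
  unfold is_int_R, is_RInt_gen, filterlimi, filtermapi, filter_le.
  intros H P HP. specialize (H P HP).
  apply (fp_refl c) in H.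
  eapply filter_imp; [|exact H].
  intros [a b] [y [Hy Py]]. simpl in *. exists y. split; [|exact Py].
  apply is_RInt_swap in Hy.
  assert (H2 := is_RInt_comp_lin g (-1) c a b (opp y)).
  replace (-1 * a + c) with (c - a) in H2 by ring.
  replace (-1 * b + c) with (c - b) in H2 by ring.
  specialize (H2 Hy).
  apply (is_RInt_scal _ _ _ (-1)) in H2.
  eapply is_RInt_ext; [|].
  2:{ replace y with (scal (-1) (opp y)). exact H2.
      unfold scal, opp; simpl; unfold mult; simpl. unfold opp; simpl. ring. }
  intros x _. unfold scal; simpl; unfold mult; simpl. 
  replace (-1 * x + c) with (c - x) by ring. ring.
Qed.

Lemma is_int_R_ge0 (g : R -> R) (l : R) :
  (forall y, 0 <= g y) -> is_int_R g l -> 0 <= l.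
Proof.
  intros Hg Hl.
  assert (H := @RInt_gen_norm R_CompleteNormedModule _ _ (Rbar_locally_filter m_infty) (Rbar_locally_filter p_infty) g g l l).
  assert (Hle : Rabs l <= l).
  { apply H; auto.
    - apply (Filter_prod _ _ _ (fun a => a < 0) (fun b => 0 < b)).
      + exists 0. auto.
      + exists 0. auto.
      + intros; simpl; lra.
    - apply (Filter_prod _ _ _ (fun a => True) (fun b => True)).
      + exists 0. auto.
      + exists 0. auto.
      + intros; simpl. unfold norm; simpl. unfold abs; simpl. rewrite Rabs_pos_eq; auto. lra. }
  assert (0 <= Rabs l) by apply Rabs_pos. lra.
Qed.

Lemma is_int_R_minus (g h : R -> R) (l1 l2 : R) :
  is_int_R g l1 -> is_int_R h l2 -> is_int_R (fun y => g y - h y) (l1 - l2).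
Proof.
  intros H1 H2. apply (is_RInt_gen_minus g h l1 l2 H1 H2).
Qed.

Lemma is_int_R_plus (g h : R -> R) (l1 l2 : R) :
  is_int_R g l1 -> is_int_R h l2 -> is_int_R (fun y => g y + h y) (l1 + l2).
Proof.
  intros H1 H2. apply (is_RInt_gen_plus g h l1 l2 H1 H2).
Qed.

Lemma is_int_R_scal (g : R -> R) (a l : R) :
  is_int_R g l -> is_int_R (fun y => a * g y) (a * l).
Proof.
  intros H1. apply (is_RInt_gen_scal g a l H1).
Qed.

Lemma is_int_R_ext (g h : R -> R) (l : R) :
  (forall y, g y = h y) -> is_int_R g l -> is_int_R h l.
Proof.
  intros E H. unfold is_int_R. eapply is_RInt_gen_ext; [|exact H].
  apply (Filter_prod _ _ _ (fun a => True) (fun b => True)).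
  + exists 0. auto.
  + exists 0. auto.
  + intros; simpl. auto.
Qed.

Lemma NL (k u : R -> R) (c x M I1 I2 : R) :
  even_fun k -> is_int_R k 1 ->
  is_int_R (fun y => k (x - y) * u y) I1 ->
  is_int_R (fun y => k ((2*c - x) - y) * u y) I2 ->
  (forall y, -(k (x - y) + k ((2*c - x) - y)) * M <=
             (k (x - y) - k ((2*c - x) - y)) * (u y - u (2*c - y))) ->
  -M <= I1 - I2.
Proof.
  intros ke k1 H1 H2 P.
  pose (G := fun y => k (x - y) * u y - k ((2*c - x) - y) * u y).
  assert (HG : is_int_R G (I1 - I2)) by (apply is_int_R_minus; auto).
  assert (HG' := is_int_R_refl G (2*c) _ HG).
  assert (Kx := is_int_R_refl k x _ k1).
  assert (Kx' := is_int_R_refl k (2*c - x) _ k1).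
  assert (HF := is_int_R_plus _ _ _ _ (is_int_R_plus _ _ _ _ HG HG')
                 (is_int_R_scal _ M _ (is_int_R_plus _ _ _ _ Kx Kx'))).
  apply is_int_R_ge0 in HF; [lra|].
  intros y. unfold G.
  replace (x - (2*c - y)) with (-((2*c - x) - y)) by ring.
  replace ((2*c - x) - (2*c - y)) with (-(x - y)) by ring.
  rewrite !ke. specialize (P y). nra.
Qed.

Lemma cont_ind (a b : R) (P : R -> Prop) : a <= b -> P a ->
  (forall S, a < S <= b -> (forall d, 0 < d -> exists e, S - d < e < S /\ a <= e /\ P e) -> P S) ->
  (forall S, a <= S < b -> P S -> exists y, S < y <= b /\ P y) -> P b.
Proof.
  intros Hab Pa HL HR.
  pose (E := fun s => a <= s <= b /\ P s).
  assert (Hb : bound E) by (exists b; intros s [Hs _]; lra).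
  assert (Hne : exists s, E s) by (exists a; split; [lra|auto]).
  destruct (completeness E Hb Hne) as [S [HS1 HS2]].
  assert (aS : a <= S) by (apply HS1; split; [lra|auto]).
  assert (Sb : S <= b) by (apply HS2; intros s [Hs _]; lra).
  assert (PS : P S).
  { destruct (classic (P S)) as [h|nPS]; auto.
    destruct (Req_dec S a) as [e|ne]; [subst; auto|].
    apply HL; [lra|]. intros d Hd.
    apply NNPP; intro Hno.
    assert (Hub : is_upper_bound E (S - d)).
    { intros s [Hs Ps]. apply Rnot_lt_le; intro Hlt.
      assert (s <= S) by (apply HS1; split; auto).
      destruct (Req_dec s S) as [->|nsS]; [contradiction|].
      apply Hno. exists s. split; [lra|]. split; [lra|auto]. }
    specialize (HS2 _ Hub). lra. }
  destruct (Rle_lt_or_eq_dec S b Sb) as [lt|eq]; [|subst; auto].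
  destruct (HR S (conj aS lt) PS) as [y [Hy Py]].
  assert (y <= S) by (apply HS1; split; [lra|auto]). lra.
Qed.

Definition clamp (x : R) := Rmax 0 (Rmin 1 x).

Lemma clamp_I01 x : I01 (clamp x).
Proof. unfold clamp, I01, Rmax, Rmin. repeat destruct Rle_dec; lra. Qed.
Lemma clamp_id x : I01 x -> clamp x = x.
Proof. unfold clamp, I01, Rmax, Rmin. intros. repeat destruct Rle_dec; lra. Qed.
Lemma clamp_lip x y : Rabs (clamp y - clamp x) <= Rabs (y - x).
Proof. unfold clamp, Rmax, Rmin. repeat destruct Rle_dec; unfold Rabs; repeat destruct Rcase_abs; lra. Qed.

Lemma df_bound (df : R -> R) : continuous_on I01 df ->
  exists L, 0 <= L /\ forall x, I01 x -> Rabs (df x) <= L.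
Proof.
  intros Hc.
  assert (Hcp : forall c, continuity_pt (fun x => df (clamp x)) c).
  { intros c. apply continuity_pt_filterlim.
    eapply filterlim_comp; [|apply (Hc (clamp c) (clamp_I01 c))].
    intros P [eps Heps]. exists eps. intros y Hy. apply Heps; [|apply clamp_I01].
    change (Rabs (clamp y - clamp c) < eps). eapply Rle_lt_trans; [apply clamp_lip|exact Hy]. }
  destruct (continuity_ab_maj (fun x => df (clamp x)) 0 1 ltac:(lra) (fun c _ => Hcp c)) as [Mx [HM _]].
  destruct (continuity_ab_min (fun x => df (clamp x)) 0 1 ltac:(lra) (fun c _ => Hcp c)) as [mx [Hm _]].
  exists (Rabs (df (clamp Mx)) + Rabs (df (clamp mx))). split.
  - pose proof (Rabs_pos (df (clamp Mx))). pose proof (Rabs_pos (df (clamp mx))). lra.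
  - intros x Hx. specialize (HM x Hx). specialize (Hm x Hx). simpl in *.
    rewrite (clamp_id x Hx) in HM, Hm.
    revert HM Hm. unfold Rabs. repeat destruct Rcase_abs; lra.
Qed.

Lemma f_local (f df : R -> R) (L : R) : is_derive_01 f df ->
  (forall x, I01 x -> Rabs (df x) <= L) ->
  forall s, I01 s -> exists d, 0 < d /\ forall y, I01 y -> y <> s -> Rabs (y - s) < d ->
     Rabs (f y - f s) <= (L + 1) * Rabs (y - s).
Proof.
  intros Hd HL s Hs.
  specialize (Hd s Hs (ball (df s) (mkposreal 1 Rlt_0_1)) (locally_ball _ _)).
  destruct Hd as [eps Heps]. exists eps. split; [apply cond_pos|].
  intros y Hy Hne Hys.
  specialize (Heps y Hys (conj Hy Hne)).
  change (Rabs ((f y - f s) / (y - s) - df s) < 1) in Heps.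
  specialize (HL s Hs).
  assert (Hq : Rabs ((f y - f s) / (y - s)) <= L + 1).
  { revert Heps HL. unfold Rabs. repeat destruct Rcase_abs; lra. }
  replace (f y - f s) with ((f y - f s) / (y - s) * (y - s)) by (field; lra).
  rewrite Rabs_mult. apply Rmult_le_compat_r; [apply Rabs_pos|exact Hq].
Qed.

Lemma f_lip (f df : R -> R) : C1_01 f df ->
  exists K, 0 <= K /\ forall a b, I01 a -> I01 b -> Rabs (f b - f a) <= K * Rabs (b - a).
Proof.
  intros [Hd Hc]. destruct (df_bound df Hc) as [L [L0 HL]].
  pose proof (f_local f df L Hd HL) as Hloc.
  exists (L + 1). split; [lra|].
  assert (Hmain : forall a b, I01 a -> I01 b -> a <= b -> Rabs (f b - f a) <= (L + 1) * (b - a)).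
  { intros a b Ha Hb Hab.
    apply (cont_ind a b (fun s => Rabs (f s - f a) <= (L + 1) * (s - a))); auto.
    - replace (f a - f a) with 0 by ring. rewrite Rabs_R0. lra.
    - intros S HS Hle.
      assert (IS : I01 S) by (unfold I01 in *; lra).
      destruct (Hloc S IS) as [d [Hd0 Hdd]].
      destruct (Hle d Hd0) as [e [He1 [He2 He3]]].
      assert (Ie : I01 e) by (unfold I01 in *; lra).
      specialize (Hdd e Ie ltac:(lra) ltac:(rewrite Rabs_left; lra)).
      rewrite (Rabs_left (e - S)) in Hdd by lra.
      replace (f S - f a) with ((f S - f e) + (f e - f a)) by ring.
      eapply Rle_trans; [apply Rabs_triang|].
      rewrite (Rabs_minus_sym (f S) (f e)).
      assert (E1 : (L + 1) * - (e - S) + (L + 1) * (e - a) = (L + 1) * (S - a)) by ring.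
      lra.
    - intros S HS PS.
      assert (IS : I01 S) by (unfold I01 in *; lra).
      destruct (Hloc S IS) as [d [Hd0 Hdd]].
      exists (Rmin (S + d/2) b).
      assert (S < Rmin (S + d/2) b <= b) by (unfold Rmin; destruct Rle_dec; lra).
      split; auto.
      assert (Iy : I01 (Rmin (S + d/2) b)) by (unfold I01 in *; lra).
      assert (Rmin (S + d/2) b <= S + d/2) by apply Rmin_l.
      specialize (Hdd _ Iy ltac:(lra) ltac:(rewrite Rabs_right; lra)).
      rewrite (Rabs_right (Rmin (S + d / 2) b - S)) in Hdd by lra.
      replace (f (Rmin (S + d / 2) b) - f a) with ((f (Rmin (S + d / 2) b) - f S) + (f S - f a)) by ring.
      eapply Rle_trans; [apply Rabs_triang|].
      assert (E1 : (L + 1) * (Rmin (S + d / 2) b - S) + (L + 1) * (S - a) = (L + 1) * (Rmin (S + d / 2) b - a)) by ring.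
      lra. }
  intros a b Ha Hb. destruct (Rle_dec a b).
  - rewrite (Rabs_right (b - a)) by lra. auto.
  - rewrite <- Rabs_Ropp, (Rabs_left (b - a)) by lra.
    replace (- (f b - f a)) with (f a - f b) by ring. replace (- (b - a)) with (a - b) by ring. apply Hmain; auto; lra.
Qed.

Lemma deriv_local (g : R -> R) (S d eps : R) : is_derive g S d -> 0 < eps ->
  exists del, 0 < del /\
   (forall y, S < y < S + del -> (d - eps) * (y - S) <= g y - g S) /\
   (forall y, S - del < y < S -> (d - eps) * (S - y) <= g S - g y).
Proof.
  intros H He. apply is_derive_Reals in H.
  destruct (H eps He) as [del Hdel]. exists del. split; [apply cond_pos|split].
  - intros y Hy. specialize (Hdel (y - S) ltac:(lra) ltac:(rewrite Rabs_right; lra)).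
    replace (S + (y - S)) with y in Hdel by ring.
    set (q := (g y - g S) / (y - S)) in *.
    assert (Eq : g y - g S = q * (y - S)) by (unfold q; field; lra).
    rewrite Eq. apply Rmult_le_compat_r; [lra|].
    revert Hdel. unfold Rabs. destruct Rcase_abs; lra.
  - intros y Hy. specialize (Hdel (y - S) ltac:(lra) ltac:(rewrite Rabs_left; lra)).
    replace (S + (y - S)) with y in Hdel by ring.
    set (q := (g y - g S) / (y - S)) in *.
    assert (Eq : g S - g y = q * (S - y)) by (unfold q; field; lra).
    rewrite Eq. apply Rmult_le_compat_r; [lra|].
    revert Hdel. unfold Rabs. destruct Rcase_abs; lra.
Qed.

Lemma growth (g : R -> R) (tau t K : R) : 0 <= tau <= t -> 0 <= K -> 0 <= g tau ->
  (forall S, tau <= S <= t -> forall eps, 0 < eps -> exists del, 0 < del /\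
      forall y, tau <= y -> Rabs (y - S) < del -> Rabs (g y - g S) < eps) ->
  (forall S, tau < S <= t -> g S < 0 -> exists d, is_derive g S d /\ -K <= d) ->
  -K * (t - tau) <= g t.
Proof.
  intros Ht HK Hg0 Hc Hd.
  apply Rnot_lt_le; intro Hlt.
  set (eps := (-K * (t - tau) - g t) / (t - tau + 2)).
  assert (Heps : 0 < eps) by (unfold eps; apply Rdiv_lt_0_compat; lra).
  assert (Hepsd : eps * (t - tau + 2) = -K * (t - tau) - g t) by (unfold eps; field; lra).
  assert (HP : -(K + eps) * (t - tau) - eps <= g t).
  { apply (cont_ind tau t (fun s => -(K + eps) * (s - tau) - eps <= g s)); [lra| nra | |].
    - intros S HS Hle.
      destruct (Rlt_or_le (g S) 0) as [neg|pos]; [|nra].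
      destruct (Hd S HS neg) as [d [Hder Hdk]].
      destruct (deriv_local g S d eps Hder Heps) as [del [Hdel [_ Hl]]].
      destruct (Hle del Hdel) as [e [He1 [He2 He3]]].
      specialize (Hl e ltac:(lra)).
      assert ((d - eps) * (S - e) >= (-K - eps) * (S - e)) by nra. nra.
    - intros S HS PS.
      destruct (Rlt_or_le (g S) 0) as [neg|pos].
      + assert (tau < S) by (destruct (Req_dec S tau); [subst; lra|lra]).
        destruct (Hd S ltac:(lra) neg) as [d [Hder Hdk]].
        destruct (deriv_local g S d eps Hder Heps) as [del [Hdel [Hr _]]].
        exists (Rmin (S + del/2) t).
        assert (S < Rmin (S + del/2) t <= t) by (unfold Rmin; destruct Rle_dec; lra).
        assert (Rmin (S + del/2) t <= S + del/2) by apply Rmin_l.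
        split; auto.
        specialize (Hr (Rmin (S + del/2) t) ltac:(lra)).
        assert ((d - eps) * (Rmin (S + del/2) t - S) >= (-K - eps) * (Rmin (S + del/2) t - S)) by nra.
        nra.
      + destruct (Hc S ltac:(lra) eps Heps) as [del [Hdel Hcc]].
        exists (Rmin (S + del/2) t).
        assert (S < Rmin (S + del/2) t <= t) by (unfold Rmin; destruct Rle_dec; lra).
        assert (Rmin (S + del/2) t <= S + del/2) by apply Rmin_l.
        split; auto.
        specialize (Hcc (Rmin (S + del/2) t) ltac:(lra) ltac:(rewrite Rabs_right; lra)).
        revert Hcc. unfold Rabs. destruct Rcase_abs; intros; nra. }
  nra.
Qed.

Lemma cont_u (k f u0 : R -> R) (u : R -> R -> R) : is_solution k f u0 u ->
  forall x S, 0 <= S -> forall eps, 0 < eps -> exists del, 0 < del /\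
    forall y, 0 <= y -> Rabs (y - S) < del -> Rabs (u y x - u S x) < eps.
Proof.
  intros [Hb [H0 [Hr Hd]]] x S HS eps Heps.
  destruct (Req_dec S 0) as [->|nS].
  - destruct (Hr x (ball (u 0 x) (mkposreal eps Heps)) (locally_ball _ _)) as [del Hdel].
    exists del. split; [apply cond_pos|]. intros y Hy Hys.
    destruct (Req_dec y 0) as [->|ny].
    + replace (u 0 x - u 0 x) with 0 by ring. rewrite Rabs_R0. auto.
    + exact (Hdel y Hys ltac:(lra)).
  - destruct (Hd S x ltac:(lra)) as [I [_ HI]].
    assert (Hc := ex_derive_continuous (fun s => u s x) S (ex_intro _ _ HI)).
    destruct (Hc (ball (u S x) (mkposreal eps Heps)) (locally_ball _ _)) as [del Hdel].
    exists del. split; [apply cond_pos|]. intros y Hy Hys. exact (Hdel y Hys).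
Qed.

Section Main.
Variables (k f u0 : R -> R) (u : R -> R -> R) (c K : R) (D : R -> Prop).
Hypotheses (k_even : even_fun k) (k_nonneg : forall x, 0 <= k x) (k_int1 : is_int_R k 1)
  (u_sol : is_solution k f u0 u) (HK : 0 <= K)
  (Hlip : forall a b, I01 a -> I01 b -> Rabs (f b - f a) <= K * Rabs (b - a))
  (HD1 : forall y, D y \/ D (2*c - y))
  (HD2 : forall x y, D x -> D y -> k (2*c - x - y) <= k (x - y))
  (H0 : forall x, D x -> 0 <= u 0 x - u 0 (2*c - x)).

Let w s x := u s x - u s (2*c - x).

Lemma w_anti s y : w s (2*c - y) = - w s y.
Proof. unfold w. replace (2*c - (2*c - y)) with y by ring. ring. Qed.

Lemma w_bound s y : 0 <= s -> -1 <= w s y <= 1.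
Proof.
  intros Hs. destruct u_sol as [Hb _]. unfold w.
  pose proof (Hb s y Hs). pose proof (Hb s (2*c - y) Hs). unfold I01 in *. lra.
Qed.

Lemma w_deriv s x M : 0 < s -> D x -> 0 <= M -> (forall z, D z -> -M <= w s z) ->
  w s x < 0 -> exists d, is_derive (fun r => w r x) s d /\ -((1 + K) * M) <= d.
Proof.
  intros Hs Dx HM Hz Hw.
  destruct u_sol as [Hb [_ [_ Hd]]].
  destruct (Hd s x Hs) as [I1 [HI1 Hd1]].
  destruct (Hd s (2*c - x) Hs) as [I2 [HI2 Hd2]].
  exists ((I1 - u s x + f (u s x)) - (I2 - u s (2*c - x) + f (u s (2*c - x)))). split.
  - exact (is_derive_minus (fun r => u r x) (fun r => u r (2*c - x)) s _ _ Hd1 Hd2).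
  - assert (HNL : -M <= I1 - I2).
    { apply (NL k (u s) c x M I1 I2 k_even k_int1 HI1 HI2).
      intros y. pose proof (k_nonneg (x - y)). pose proof (k_nonneg (2*c - x - y)).
      destruct (HD1 y) as [Dy|Dy].
      - pose proof (HD2 x y Dx Dy). pose proof (Hz y Dy). unfold w in *.
        set (k1 := k (x - y)) in *. set (k2 := k (2*c - x - y)) in *.
        set (wy := u s y - u s (2 * c - y)) in *.
        assert ((k1 - k2) * wy >= (k1 - k2) * (- M)) by (apply Rle_ge, Rmult_le_compat_l; lra).
        assert (k2 * M >= 0) by (apply Rle_ge, Rmult_le_pos; lra). lra.
      - pose proof (HD2 x (2*c - y) Dx Dy) as Q1. pose proof (Hz _ Dy) as Q2.
        rewrite w_anti in Q2.
        replace (2*c - x - (2*c - y)) with (-(x - y)) in Q1 by ring.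
        replace (x - (2*c - y)) with (-(2*c - x - y)) in Q1 by ring.
        rewrite !k_even in Q1. unfold w in *.
        set (k1 := k (x - y)) in *. set (k2 := k (2*c - x - y)) in *.
        set (wy := u s y - u s (2 * c - y)) in *.
        assert ((k2 - k1) * wy <= (k2 - k1) * M) by (apply Rmult_le_compat_l; lra).
        assert (k1 * M >= 0) by (apply Rle_ge, Rmult_le_pos; lra). lra. }
    pose proof (Hz x Dx).
    assert (Ha : I01 (u s (2*c - x))) by (apply Hb; lra).
    assert (Hb' : I01 (u s x)) by (apply Hb; lra).
    pose proof (Hlip _ _ Ha Hb') as HL.
    unfold w in *.
    rewrite (Rabs_left (u s x - u s (2 * c - x))) in HL by lra.
    assert (f (u s x) - f (u s (2 * c - x)) >= - (K * - (u s x - u s (2 * c - x)))).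
    { revert HL. unfold Rabs. destruct Rcase_abs; lra. }
    assert (K * - (u s x - u s (2 * c - x)) <= K * M) by (apply Rmult_le_compat_l; lra).
    assert ((1 + K) * M = M + K * M) by ring. lra.
Qed.

Lemma w_cont x S : 0 <= S -> forall eps, 0 < eps -> exists del, 0 < del /\
    forall y, 0 <= y -> Rabs (y - S) < del -> Rabs (w y x - w S x) < eps.
Proof.
  intros HS eps Heps.
  destruct (cont_u k f u0 u u_sol x S HS (eps/2) ltac:(lra)) as [d1 [Hd1 H1]].
  destruct (cont_u k f u0 u u_sol (2*c - x) S HS (eps/2) ltac:(lra)) as [d2 [Hd2 H2]].
  exists (Rmin d1 d2). split; [apply Rmin_pos; auto|].
  intros y Hy Hys. unfold w.
  assert (Rmin d1 d2 <= d1) by apply Rmin_l. assert (Rmin d1 d2 <= d2) by apply Rmin_r.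
  specialize (H1 y Hy ltac:(lra)). specialize (H2 y Hy ltac:(lra)).
  replace (u y x - u y (2 * c - x) - (u S x - u S (2 * c - x))) with
    ((u y x - u S x) - (u y (2 * c - x) - u S (2 * c - x))) by ring.
  eapply Rle_lt_trans; [apply Rabs_triang|]. rewrite Rabs_Ropp. lra.
Qed.

Lemma window tau : 0 <= tau -> (forall x, D x -> 0 <= w tau x) ->
  forall t, tau <= t <= tau + / (2 * (1 + K)) -> forall x, D x -> 0 <= w t x.
Proof.
  intros Htau Hi.
  set (h := / (2 * (1 + K))).
  assert (Hh : 0 < h) by (unfold h; apply Rinv_0_lt_compat; lra).
  assert (Hh2 : (1 + K) * h = / 2) by (unfold h; field; lra).
  pose (E := fun r => r = 0 \/ exists s y, tau <= s <= tau + h /\ D y /\ r = - w s y).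
  assert (Hbd : bound E).
  { exists 1. intros r [->|[s [y [Hs [Dy ->]]]]]; [lra|].
    pose proof (w_bound s y ltac:(lra)). lra. }
  destruct (completeness E Hbd (ex_intro _ 0 (or_introl eq_refl))) as [N [HN1 HN2]].
  assert (N0 : 0 <= N) by (apply HN1; left; auto).
  assert (HwN : forall s y, tau <= s <= tau + h -> D y -> -N <= w s y).
  { intros s y Hs Dy. assert (- w s y <= N) by (apply HN1; right; exists s, y; auto). lra. }
  assert (Hall : forall t x, tau <= t <= tau + h -> D x -> - (N / 2) <= w t x).
  { intros t x Ht Dx.
    assert (G := growth (fun r => w r x) tau t ((1 + K) * N) ltac:(lra) ltac:(apply Rmult_le_pos; lra) (Hi x Dx)).
    assert (-((1 + K) * N) * (t - tau) <= w t x).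
    { apply G.
      - intros S HS eps Heps. destruct (w_cont x S ltac:(lra) eps Heps) as [del [Hdel Hc]].
        exists del. split; auto. intros y Hy. apply Hc. lra.
      - intros S HS Hneg. apply w_deriv; auto; [lra|]. intros z Dz. apply HwN; auto; lra. }
    assert ((1 + K) * N * (t - tau) <= (1 + K) * N * h).
    { apply Rmult_le_compat_l; [apply Rmult_le_pos; lra|lra]. }
    assert (E1 : (1 + K) * N * h = N / 2) by (rewrite Rmult_assoc, (Rmult_comm N h), <- Rmult_assoc, Hh2; field).
    lra. }
  assert (HNle : N <= N / 2).
  { apply HN2. intros r [->|[s [y [Hs [Dy ->]]]]]; [lra|].
    pose proof (Hall s y Hs Dy). lra. }
  intros t Ht x Dx. pose proof (HwN t x Ht Dx). lra.
Qed.

Lemma compare : forall t, 0 <= t -> forall x, D x -> 0 <= w t x.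
Proof.
  set (h := / (2 * (1 + K))).
  assert (Hh : 0 < h) by (unfold h; apply Rinv_0_lt_compat; lra).
  assert (Hn : forall n, forall t, 0 <= t <= INR n * h -> forall x, D x -> 0 <= w t x).
  { induction n as [|n IH]; intros t Ht x Dx.
    - simpl in Ht. replace t with 0 by lra. destruct u_sol as [_ [Hu0 _]].
      apply H0; auto.
    - rewrite S_INR in Ht.
      pose proof (pos_INR n).
      destruct (Rle_dec t (INR n * h)).
      + apply IH; auto; lra.
      + apply (window (INR n * h)); [apply Rmult_le_pos; lra| |unfold h in *; lra|auto].
        intros y Dy. apply IH; auto. split; [apply Rmult_le_pos; lra|lra]. }
  intros t Ht x Dx.
  destruct (INR_archimed h t Hh) as [n Hn'].
  apply (Hn n); auto. lra.
Qed.

End Main.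

Lemma ed_le (g : R -> R) a b : even_fun g -> decr_Rplus g -> Rabs a <= Rabs b -> g b <= g a.
Proof.
  intros He Hd H.
  assert (Ha : g a = g (Rabs a)) by (unfold Rabs; destruct Rcase_abs; [rewrite He|]; reflexivity).
  assert (Hb : g b = g (Rabs b)) by (unfold Rabs; destruct Rcase_abs; [rewrite He|]; reflexivity).
  rewrite Ha, Hb. apply Hd; auto. apply Rabs_pos.
Qed.

Theorem theorem2p5
  (k f df u0 : R -> R) (u : R -> R -> R) (x1 : R)
  (* kernel *)
  (k_cont : forall x, continuous k x)
  (k_nonneg : forall x, 0 <= k x)
  (k_int1 : is_int_R k 1)
  (K1 : exists lam, 0 < lam /\
          ex_RInt_gen (fun x => k x * exp (lam * Rabs x))
            (Rbar_locally m_infty) (Rbar_locally p_infty))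
  (K2 : exists a b, 0 < a /\ b < 0 /\ 0 < k a /\ 0 < k b)
  (* nonlinearity *)
  (f_C1 : C1_01 f df)
  (f0 : f 0 = 0) (f1 : f 1 = 0)
  (f_pos : forall s, 0 < s < 1 -> 0 < f s)
  (df0_pos : 0 < df 0)
  (f_KPP : forall s, 0 < s < 1 -> f s <= df 0 * s)
  (* initial datum *)
  (u0_cont : forall x, continuous u0 x)
  (u0_bnd : forall x, 0 <= u0 x <= 1)
  (* solution *)
  (u_sol : is_solution k f u0 u)
  (* symmetry hypotheses *)
  (k_even : even_fun k) (k_decr : decr_Rplus k)
  (u0_even : even_fun (fun y => u0 (y + x1)))
  (u0_decr : decr_Rplus (fun y => u0 (y + x1))) :
  forall t, 0 < t ->
    even_fun (fun y => u t (y + x1)) /\ decr_Rplus (fun y => u t (y + x1)).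
Proof.
  intros t Ht.
  destruct (f_lip f df f_C1) as [K [HK Hlip]].
  assert (Hu0 : forall x, u 0 x = u0 x) by (destruct u_sol as [_ [H _]]; exact H).
  assert (Hv : forall a b, Rabs (a - x1) <= Rabs (b - x1) -> u0 b <= u0 a).
  { intros a b H. pose proof (ed_le _ _ _ u0_even u0_decr H) as Q. simpl in Q.
    replace (b - x1 + x1) with b in Q by ring. replace (a - x1 + x1) with a in Q by ring. exact Q. }
  assert (HDk : forall c x y, ((x <= c /\ y <= c) \/ (c <= x /\ c <= y)) -> k (2 * c - x - y) <= k (x - y)).
  { intros c x y H. apply ed_le; auto.
    unfold Rabs; repeat destruct Rcase_abs; lra. }
  split.
  - assert (C1 := compare k f u0 u x1 K (fun x => x <= x1) k_even k_nonneg k_int1 u_sol HK Hlip).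
    assert (C2 := compare k f u0 u x1 K (fun x => x1 <= x) k_even k_nonneg k_int1 u_sol HK Hlip).
    simpl in C1, C2.
    assert (H0 : forall x, u 0 x - u 0 (2 * x1 - x) = 0).
    { intros x. rewrite !Hu0.
      assert (u0 x <= u0 (2 * x1 - x)) by (apply Hv; unfold Rabs; repeat destruct Rcase_abs; lra).
      assert (u0 (2 * x1 - x) <= u0 x) by (apply Hv; unfold Rabs; repeat destruct Rcase_abs; lra).
      lra. }
    specialize (C1 ltac:(intros y; lra) ltac:(intros x y Hx Hy; apply HDk; lra)
                 ltac:(intros x _; rewrite H0; lra) t ltac:(lra)).
    specialize (C2 ltac:(intros y; lra) ltac:(intros x y Hx Hy; apply HDk; lra)
                 ltac:(intros x _; rewrite H0; lra) t ltac:(lra)).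
    intros y. replace (- y + x1) with (2 * x1 - (y + x1)) by ring.
    set (z := y + x1).
    destruct (Rle_dec z x1).
    + specialize (C1 z r). specialize (C2 (2 * x1 - z) ltac:(lra)).
      replace (2 * x1 - (2 * x1 - z)) with z in C2 by ring. lra.
    + specialize (C2 z ltac:(lra)). specialize (C1 (2 * x1 - z) ltac:(lra)).
      replace (2 * x1 - (2 * x1 - z)) with z in C1 by ring. lra.
  - intros p q Hp Hpq. simpl.
    set (c := x1 + (p + q) / 2).
    assert (C1 := compare k f u0 u c K (fun x => x <= c) k_even k_nonneg k_int1 u_sol HK Hlip).
    simpl in C1.
    specialize (C1 ltac:(intros y; unfold c in *; lra) ltac:(intros x y Hx Hy; apply HDk; lra)).
    assert (H0 : forall x, x <= c -> 0 <= u 0 x - u 0 (2 * c - x)).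
    { intros x Hx. rewrite !Hu0.
      assert (u0 (2 * c - x) <= u0 x) by (apply Hv; unfold c in *; unfold Rabs; repeat destruct Rcase_abs; lra).
      lra. }
    specialize (C1 H0 t ltac:(lra) (p + x1) ltac:(unfold c; lra)).
    replace (2 * c - (p + x1)) with (q + x1) in C1 by (unfold c; field). lra.
Qed.
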